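(* Let $(u,v)\in F^2$ with $(u,v)\sim_{AC}\mathrm{AK}(3)$, where $\mathrm{AK}(3)=(xyxy^{-1}x^{-1}y^{-1},\ x^3y^{-4})$. Then $(\varphi(u),\varphi(v))\sim_{AC}\mathrm{AK}(3)$ for every $\varphi\in\mathrm{Aut}(F)$.
   Context: $F=F(x,y)$ is the free group on $\{x,y\}$. $\mathrm{AK}(3)$ is the pair corresponding to the presentation $\langle x,y\mid xyx=yxy,\ x^3=y^4\rangle$. The Andrews–Curtis (AC) moves on a pair $(r_1,r_2)\in F^2$ are: replace $r_i$ by $r_ir_j$ ($i\ne j$); replace $r_i$ by $r_i^{-1}$; replace $r_i$ by $w^{-1}r_iw$ for some $w\in F$. Two pairs are AC-equivalent, $\sim_{AC}$, if one can be obtained from the other by a finite sequence of AC-moves. *)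

(* Defs.v *)
From mathcomp Require Import all_boot.
Set Implicit Arguments. Unset Strict Implicit. Unset Printing Implicit Defensive.

(* A letter is (is_y, is_inverse): (false,false)=x, (true,false)=y,
   (false,true)=x^-1, (true,true)=y^-1. *)
Definition letter := (bool * bool)%type.
Definition linv (a : letter) : letter := (a.1, ~~ a.2).

Definition lx : letter := (false, false).
Definition ly : letter := (true, false).
Definition lX : letter := (false, true).
Definition lY : letter := (true, true).

Definition reduced (s : seq letter) : bool :=
  if s is a :: t then path (fun a b => b != linv a) a t else true.

Definition cons_red (a : letter) (w : seq letter) : seq letter :=
  if w is b :: w' then (if b == linv a then w' else a :: w) else [:: a].

Definition red (w : seq letter) : seq letter := foldr cons_red [::] w.

Lemma reduced_cons_red a w : reduced w -> reduced (cons_red a w).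
Proof.
case: w => [|b w] //= Hw.
case: eqP => [_|Hb].
  by case: w Hw => //= c w /andP[].
by rewrite /= Hw andbT; apply/eqP.
Qed.

Lemma reduced_red w : reduced (red w).
Proof. by elim: w => [|a w IH] //=; apply: reduced_cons_red. Qed.

Definition F := { w : seq letter | reduced w }.

Definition of_word (w : seq letter) : F := exist _ (red w) (reduced_red w).

Definition oneF : F := of_word [::].
Definition mulF (u v : F) : F := of_word (proj1_sig u ++ proj1_sig v).
Definition invF (u : F) : F := of_word (rev (map linv (proj1_sig u))).

Definition is_aut (phi : F -> F) : Prop :=
  (forall a b, phi (mulF a b) = mulF (phi a) (phi b)) /\ bijective phi.

Inductive ac_move : F * F -> F * F -> Prop :=
  | ac_mul1 r1 r2 : ac_move (r1, r2) (mulF r1 r2, r2)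
  | ac_mul2 r1 r2 : ac_move (r1, r2) (r1, mulF r2 r1)
  | ac_inv1 r1 r2 : ac_move (r1, r2) (invF r1, r2)
  | ac_inv2 r1 r2 : ac_move (r1, r2) (r1, invF r2)
  | ac_conj1 r1 r2 w : ac_move (r1, r2) (mulF (mulF (invF w) r1) w, r2)
  | ac_conj2 r1 r2 w : ac_move (r1, r2) (r1, mulF (mulF (invF w) r2) w).

Inductive ac_equiv : F * F -> F * F -> Prop :=
  | ac_refl p : ac_equiv p p
  | ac_step p q r : ac_move p q -> ac_equiv q r -> ac_equiv p r.

Definition AK3 : F * F :=
  (of_word [:: lx; ly; lx; lY; lX; lY], of_word [:: lx; lx; lx; lY; lY; lY; lY]).

(* Main.v *)
Require Import Defs.
From mathcomp Require Import all_boot.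
From mathcomp Require Import zify.
From Stdlib Require Import ZArith Lia.
Import Defs.
Set Implicit Arguments. Unset Strict Implicit. Unset Printing Implicit Defensive.


Definition winv (w : seq letter) := rev (map linv w).

Lemma linvK a : linv (linv a) = a.
Proof. by case: a => [[] []]. Qed.

Lemma linv_neq a : linv a != a.
Proof. by case: a => [[] []]. Qed.

Lemma winvK w : winv (winv w) = w.
Proof. by rewrite /winv map_rev revK -map_comp (eq_map linvK) map_id. Qed.

Lemma winv_cat u v : winv (u ++ v) = winv v ++ winv u.
Proof. by rewrite /winv map_cat rev_cat. Qed.

Lemma size_winv w : size (winv w) = size w.
Proof. by rewrite /winv size_rev size_map. Qed.

Lemma reduced_consE a w : reduced (a :: w) = reduced w && (if w is b :: _ then b != linv a else true).
Proof. by case: w => [|b w] //=; rewrite andbC. Qed.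

Lemma reduced_behead w : reduced w -> reduced (behead w).
Proof. by case: w => [|a [|b w]] //= /andP[]. Qed.

Lemma cons_red_reduced a w : reduced (a :: w) -> cons_red a w = a :: w.
Proof. by case: w => [|b w] //= /andP[/negbTE ->]. Qed.

Lemma red_reduced w : reduced w -> red w = w.
Proof.
elim: w => [|a w IH] // Hw.
have -> : red (a :: w) = cons_red a (red w) by [].
by rewrite IH ?(reduced_behead Hw) // cons_red_reduced.
Qed.

Lemma cons_redK a w : reduced w -> cons_red a (cons_red (linv a) w) = w.
Proof.
case: w => [|b w] /=; first by rewrite eqxx.
rewrite linvK; case: eqP => [->|Hb] Hw.
  by rewrite cons_red_reduced.
by rewrite /= eqxx.
Qed.

Lemma red_cat u v : red (u ++ v) = foldr cons_red (red v) u.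
Proof. by rewrite /red foldr_cat. Qed.

Lemma red_catr u v : red (u ++ red v) = red (u ++ v).
Proof. by rewrite !red_cat (red_reduced (reduced_red v)). Qed.

Lemma red_cons_red a w v : reduced w ->
  red (cons_red a w ++ v) = cons_red a (red (w ++ v)).
Proof.
case: w => [|b w] Hw //=.
case: eqP => [->|_] //.
by rewrite cons_redK // reduced_red.
Qed.

Lemma red_catl u v : red (red u ++ v) = red (u ++ v).
Proof.
elim: u => [|a u IH] //=.
by rewrite red_cons_red ?reduced_red // IH.
Qed.

Lemma red_idem w : red (red w) = red w.
Proof. by rewrite red_reduced // reduced_red. Qed.

Lemma winv_cons a s : winv (a :: s) = winv s ++ [:: linv a].
Proof. by rewrite /winv /= rev_cons cats1. Qed.

Lemma red_cons2 a r : red (linv a :: a :: r) = red r.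
Proof.
have -> : red (linv a :: a :: r) = cons_red (linv a) (cons_red a (red r)) by [].
by rewrite -{2}(linvK a) cons_redK // reduced_red.
Qed.

Lemma red_cons2' a r : red (a :: linv a :: r) = red r.
Proof. by rewrite -{1}(linvK a) red_cons2. Qed.

Lemma red_winv_cancel s t : red (winv s ++ s ++ t) = red t.
Proof.
elim: s t => [|a s IH] t //=.
rewrite winv_cons -catA /= red_cat red_cons2 -red_cat; exact: IH.
Qed.

Lemma red_winv_cancel' s t : red (s ++ winv s ++ t) = red t.
Proof. by have := red_winv_cancel (winv s) t; rewrite winvK. Qed.

Lemma red_mid p q : red (p ++ q) = red (p ++ red q).
Proof. by rewrite red_catr. Qed.


Lemma of_word_val g : of_word (val g) = g.
Proof. by apply: val_inj; rewrite /= red_reduced //; case: g. Qed.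

Lemma of_word_eq u v : red u = red v -> of_word u = of_word v.
Proof. by move=> E; apply: val_inj; rewrite /= E. Qed.

Lemma of_word_red w : of_word (red w) = of_word w.
Proof. by apply: of_word_eq; rewrite red_idem. Qed.

Lemma mulF_of_word u v : mulF (of_word u) (of_word v) = of_word (u ++ v).
Proof. by apply: of_word_eq; rewrite /= red_catl red_catr. Qed.

Lemma mulFA g h k : mulF (mulF g h) k = mulF g (mulF h k).
Proof.
rewrite -(of_word_val g) -(of_word_val h) -(of_word_val k) !mulF_of_word.
by rewrite catA.
Qed.

Lemma mul1F g : mulF oneF g = g.
Proof. by rewrite -(of_word_val g) /oneF mulF_of_word. Qed.

Lemma mulF1 g : mulF g oneF = g.
Proof. by rewrite -(of_word_val g) /oneF mulF_of_word cats0. Qed.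

Lemma mulVF g : mulF (invF g) g = oneF.
Proof.
apply: of_word_eq; rewrite /= red_catl.
by have := red_winv_cancel (val g) [::]; rewrite cats0 => ->.
Qed.

Lemma mulFV g : mulF g (invF g) = oneF.
Proof.
apply: of_word_eq; rewrite /= red_catr.
by have := red_winv_cancel' (val g) [::]; rewrite cats0 => ->.
Qed.

Lemma mulKF g h : mulF (invF g) (mulF g h) = h.
Proof. by rewrite -mulFA mulVF mul1F. Qed.

Lemma mulVKF g h : mulF g (mulF (invF g) h) = h.
Proof. by rewrite -mulFA mulFV mul1F. Qed.

Lemma inv_uniq g h : mulF h g = oneF -> h = invF g.
Proof. by move=> E; rewrite -(mulF1 h) -(mulFV g) -mulFA E mul1F. Qed.

Lemma invFK g : invF (invF g) = g.
Proof. by symmetry; apply: inv_uniq; rewrite mulFV. Qed.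

Lemma invF_mul g h : invF (mulF g h) = mulF (invF h) (invF g).
Proof. by symmetry; apply: inv_uniq; rewrite mulFA mulKF mulVF. Qed.

Lemma invF1 : invF oneF = oneF.
Proof. by symmetry; apply: inv_uniq; rewrite mulF1. Qed.

Lemma invF_of_word u : invF (of_word u) = of_word (winv u).
Proof.
symmetry; apply: inv_uniq; rewrite mulF_of_word.
by apply: of_word_eq; have := red_winv_cancel u [::]; rewrite cats0 => ->.
Qed.

Ltac gsimp := rewrite ?mulFA ?mulKF ?mulVKF ?mulFV ?mulVF ?mulF1 ?mul1F ?invF_mul ?invFK ?invF1;
  rewrite ?mulFA ?mulKF ?mulVKF ?mulFV ?mulVF ?mulF1 ?mul1F ?invF_mul ?invFK ?invF1.

Lemma reduced_rcons s c : reduced (rcons s c) =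
  reduced s && (if s is _ :: _ then c != linv (last c s) else true).
Proof. by case: s => [|b s] //=; rewrite rcons_path. Qed.

Lemma reduced_winv w : reduced w -> reduced (winv w).
Proof.
elim: w => [|a w IH] // Hw.
rewrite winv_cons cats1 reduced_rcons IH ?(reduced_behead Hw) //=.
case: w Hw {IH} => [|b w] //= /andP[Hb _].
rewrite winv_cons cats1 /= last_rcons.
case: (winv w) => [|c s] /=; rewrite ?last_rcons;
  by apply: contra Hb => /eqP ->; rewrite linvK.
Qed.

Lemma val_invF g : val (invF g) = winv (val g).
Proof. by rewrite /= red_reduced // reduced_winv //; case: g. Qed.

Lemma val_mulF g h : val (mulF g h) = red (val g ++ val h).
Proof. by []. Qed.


Definition img (a b : F) (l : letter) : F :=
  if l.1 then (if l.2 then invF b else b) else (if l.2 then invF a else a).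

Definition evw (a b : F) (w : seq letter) : F :=
  foldr (fun l acc => mulF (img a b l) acc) oneF w.

Definition ev (a b : F) (g : F) : F := evw a b (val g).

Lemma img_linv a b l : img a b (linv l) = invF (img a b l).
Proof. by case: l => [[] []] //=; rewrite invFK. Qed.

Lemma evw_cat a b u v : evw a b (u ++ v) = mulF (evw a b u) (evw a b v).
Proof. by elim: u => [|l u IH] /=; rewrite ?mul1F // IH mulFA. Qed.

Lemma evw_cons_red a b l w : evw a b (cons_red l w) = mulF (img a b l) (evw a b w).
Proof.
case: w => [|c w] //=.
case: eqP => [->|_] //=.
by rewrite img_linv mulVKF.
Qed.

Lemma evw_red a b w : evw a b (red w) = evw a b w.
Proof.
elim: w => [|l w IH] //.
have -> : red (l :: w) = cons_red l (red w) by [].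
by rewrite evw_cons_red IH.
Qed.

Lemma ev_of_word a b w : ev a b (of_word w) = evw a b w.
Proof. by rewrite /ev /= evw_red. Qed.

Definition hom (phi : F -> F) := forall g h, phi (mulF g h) = mulF (phi g) (phi h).

Lemma hom_one phi : hom phi -> phi oneF = oneF.
Proof.
move=> H; have := H oneF oneF; rewrite mul1F => E.
by rewrite -(mulKF (phi oneF) (phi oneF)) -E mulVF.
Qed.

Lemma hom_inv phi g : hom phi -> phi (invF g) = invF (phi g).
Proof. by move=> H; apply: inv_uniq; rewrite -H mulVF hom_one. Qed.

Definition X := of_word [:: lx].
Definition Y := of_word [:: ly].

Lemma hom_ev phi g : hom phi -> phi g = ev (phi X) (phi Y) g.
Proof.
move=> H; rewrite -(of_word_val g) ev_of_word.
elim: (val g) => [|l w IH]; first by rewrite /= hom_one.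
rewrite -[l :: w]/([:: l] ++ w) -mulF_of_word H IH /=; congr mulF.
case: l => [[] []]; rewrite /img /= ?(hom_inv _ H) -?(hom_inv _ H) //.

Qed.

Lemma ev_hom a b : hom (ev a b).
Proof.
move=> g h; rewrite /ev val_mulF evw_red evw_cat //.
Qed.

Lemma ev_X a b : ev a b X = a.
Proof. by rewrite /ev /= mulF1. Qed.

Lemma ev_Y a b : ev a b Y = b.
Proof. by rewrite /ev /= mulF1. Qed.

Lemma ev_comp a b p q g : ev a b (ev p q g) = ev (ev a b p) (ev a b q) g.
Proof.
have H : hom (fun g => ev a b (ev p q g)) by move=> u v; rewrite !ev_hom.
by rewrite (hom_ev g H) !(ev_X, ev_Y).
Qed.

Definition cnj (c k : F) := mulF (mulF (invF c) k) c.

Lemma ev_cnj c a b g : ev (cnj c a) (cnj c b) g = cnj c (ev a b g).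
Proof.
have H : hom (fun g => cnj c (ev a b g)).
  by move=> u v; rewrite /cnj ev_hom; gsimp.
by rewrite (hom_ev g H) !(ev_X, ev_Y).
Qed.

Lemma ev_XY g : ev X Y g = g.
Proof.
have H : hom id by move=> ? ?.
exact: (esym (hom_ev g H)).
Qed.


Lemma ac_trans p q r : ac_equiv p q -> ac_equiv q r -> ac_equiv p r.
Proof.
elim=> [//|p1 p2 p3 M _ IH] H; exact: (ac_step M (IH H)).
Qed.

Lemma ac_one p q : ac_move p q -> ac_equiv p q.
Proof. by move=> M; apply: (ac_step M); constructor. Qed.

Definition mp (phi : F -> F) (p : F * F) := (phi p.1, phi p.2).

Lemma ac_move_hom phi p q : hom phi -> ac_move p q -> ac_move (mp phi p) (mp phi q).
Proof.
move=> H; case=> r1 r2 /=; rewrite /mp /= ?H ?(hom_inv _ H); try constructor.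
- move=> w; rewrite !H (hom_inv _ H); constructor.
- move=> w; rewrite !H (hom_inv _ H); constructor.
Qed.

Lemma ac_hom phi p q : hom phi -> ac_equiv p q -> ac_equiv (mp phi p) (mp phi q).
Proof.
move=> H; elim=> [p0|p1 p2 p3 M _ IH]; first by constructor.
exact: (ac_step (ac_move_hom H M) IH).
Qed.

Inductive op := M1 | M2 | I1 | I2 | C1 of seq letter | C2 of seq letter.

Definition step (s : seq letter * seq letter) (o : op) :=
  let: (w1, w2) := s in
  match o with
  | M1 => (red (w1 ++ w2), w2)
  | M2 => (w1, red (w2 ++ w1))
  | I1 => (red (winv w1), w2)
  | I2 => (w1, red (winv w2))
  | C1 u => (red (winv u ++ w1 ++ u), w2)
  | C2 u => (w1, red (winv u ++ w2 ++ u))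
  end.

Definition run (os : seq op) s := foldl step s os.

Definition ofp (s : seq letter * seq letter) := (of_word s.1, of_word s.2).

Lemma step_sound s o : ac_move (ofp s) (ofp (step s o)).
Proof.
case: s => w1 w2; case: o => [||||u|u]; rewrite /ofp /= ?of_word_red.
- by rewrite -mulF_of_word; constructor.
- by rewrite -mulF_of_word; constructor.
- by rewrite -invF_of_word; constructor.
- by rewrite -invF_of_word; constructor.
- by rewrite catA -!mulF_of_word -invF_of_word; constructor.
- by rewrite catA -!mulF_of_word -invF_of_word; constructor.
Qed.

Lemma run_sound os s : ac_equiv (ofp s) (ofp (run os s)).
Proof.
elim: os s => [|o os IH] s /=; first by constructor.
exact: (ac_step (step_sound s o) (IH _)).
Qed.

Definition Q (a b : F) := ac_equiv (ev a b AK3.1, ev a b AK3.2) AK3.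

Definition AKw1 := [:: lx; ly; lx; lY; lX; lY].
Definition AKw2 := [:: lx; lx; lx; lY; lY; lY; lY].

Lemma Q_path p q os :
  run os (val (ev p q AK3.1), val (ev p q AK3.2)) = (AKw1, AKw2) -> Q p q.
Proof.
move=> E; rewrite /Q -(of_word_val (ev p q AK3.1)) -(of_word_val (ev p q AK3.2)).
have := run_sound os (val (ev p q AK3.1), val (ev p q AK3.2)).
by rewrite E.
Qed.

Lemma Q_edge p q a b : Q p q -> Q a b -> Q (ev a b p) (ev a b q).
Proof.
move=> Hpq Hab; rewrite /Q -!ev_comp.
have := ac_hom (ev_hom a b) Hpq; rewrite /mp /= => H; exact: ac_trans H Hab.
Qed.

Lemma ac_cnj c s1 s2 p : ac_equiv (s1, s2) p -> ac_equiv (cnj c s1, cnj c s2) p.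
Proof.
move=> H.
apply: (ac_step (ac_conj1 _ _ (invF c))).
apply: (ac_step (ac_conj2 _ _ (invF c))).
by rewrite /cnj; gsimp.
Qed.

Lemma Q_cnj c a b : Q a b -> Q (cnj c a) (cnj c b).
Proof. by move=> H; rewrite /Q !ev_cnj; apply: ac_cnj. Qed.

Lemma Q_XY : Q X Y.
Proof. by rewrite /Q !ev_XY; case: AK3 => *; constructor. Qed.


Lemma PE_xy : Q (of_word [:: lx; lY]) (of_word [:: ly]).
Proof. apply: (@Q_path _ _ [:: I1; (C1 [:: ly; lx; ly; lX]); M2; (C2 [:: lx; lY]); M2; (C2 [:: lx; lY]); M1; (C1 [:: lX]); I1; (C1 [:: lY; lY; lx; ly; ly; ly; ly; lX]); M2; (C2 [:: lx; lY; lY; lY; lY]); (C2 [:: lY; lX; ly; ly]); M1; (C1 [:: lY; lY]); M2; (C2 [:: lx]); (C2 [:: lY; lY; lY; lx]); (C1 [:: lY; lx; ly]); M2; (C2 [:: lY; lX; ly; lx; ly]); (C1 [:: lx; lY; lX; lY]); (C2 [:: lx; lY; lY; lY; lY])]); vm_compute; reflexivity. Qed.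

Lemma PE_xY : Q (of_word [:: lx; ly]) (of_word [:: ly]).
Proof. apply: (@Q_path _ _ [:: I1; M2; (C2 [:: lx; ly]); M2; (C2 [:: lx; ly]); M1; (C1 [:: ly; lx]); I1; (C1 [:: lY; lY; lX; ly; ly; ly]); M2; I1; (C1 [:: lY; lY; lY; lx; ly; ly; ly; lX]); M2; (C2 [:: lx; lY; lY]); M1; (C1 [:: lY]); (C1 [:: lY; lY; lY]); (C2 [:: lx; lY; lX]); M1; (C1 [:: lx; ly]); (C2 [:: lY; lx; ly; lx; lY]); M1; (C1 [:: ly; lX; lY]); M1; I1; M2; I2; M1; I1; (C1 [:: lX; lY]); (C2 [:: lx; lY; lY; lY; lY])]); vm_compute; reflexivity. Qed.

Lemma PE_Xy : Q (of_word [:: ly; lx]) (of_word [:: ly]).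
Proof. apply: (@Q_path _ _ [:: (C2 [:: ly]); I1; (C1 [:: ly]); M2; (C2 [:: lx; ly]); M2; (C2 [:: lx; ly]); M1; (C1 [:: ly; lx]); I1; (C1 [:: lY; lY; lX; ly; ly; ly]); M2; I1; (C1 [:: lY; lY; lY; lx; ly; ly; ly; lX]); M2; (C2 [:: lx; lY; lY]); M1; (C1 [:: lY]); (C1 [:: lY; lY; lY]); (C2 [:: lx; lY; lX]); M1; (C1 [:: lx; ly]); (C2 [:: lY; lx; ly; lx; lY]); M1; (C1 [:: ly; lX; lY]); M1; I1; M2; I2; M1; I1; (C1 [:: lX; lY]); (C2 [:: lx; lY; lY; lY; lY])]); vm_compute; reflexivity. Qed.

Lemma PE_XY : Q (of_word [:: lY; lx]) (of_word [:: ly]).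
Proof. apply: (@Q_path _ _ [:: I1; (C2 [:: lY]); (C1 [:: lx; ly; lX]); M2; (C2 [:: lx; lY]); M2; (C2 [:: lx; lY]); M1; (C1 [:: lX]); I1; (C1 [:: lY; lY; lx; ly; ly; ly; ly; lX]); M2; (C2 [:: lx; lY; lY; lY; lY]); (C2 [:: lY; lX; ly; ly]); M1; (C1 [:: lY; lY]); M2; (C2 [:: lx]); (C2 [:: lY; lY; lY; lx]); (C1 [:: lY; lx; ly]); M2; (C2 [:: lY; lX; ly; lx; ly]); (C1 [:: lx; lY; lX; lY]); (C2 [:: lx; lY; lY; lY; lY])]); vm_compute; reflexivity. Qed.

Lemma PE_yx : Q (of_word [:: lx]) (of_word [:: ly; lX]).
Proof. apply: (@Q_path _ _ [:: I1; (C2 [:: lx; lx; lx]); (C1 [:: ly; ly; lX]); M2; (C2 [:: lx; lY]); (C2 [:: lx; lY]); M2; (C2 [:: lx; lY]); (C2 [:: lx; lY; lx; lx; lx; lY; lX]); (C1 [:: lY]); M2; (C2 [:: ly; lx; lY; lY]); (C2 [:: lX]); M1; I1; (C1 [:: lx; lx; lx; ly; lX; lX; lX; lY]); M2; (C2 [:: ly; lx]); I1; (C1 [:: ly]); M2; (C2 [:: lY; lx; lx; lx]); (C1 [:: lx; lx; lx]); (C2 [:: lY; lx; ly]); M1; (C1 [:: lY; lX]); (C1 [:: lX; lX]); (C2 [:: lx; lY; lX; lY; lx]); M1; (C1 [:: lX; ly; lx]); (C1 [:: lx; lx; lx; lY]); (C2 [:: ly; lx]); M1; (C1 [:: lX;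 lY; lX]); (C2 [:: lY; lX; lY; lx]); M1; (C1 [:: lX; ly; lx]); M1; I1; M2; I2; M1; I1; (C1 [:: ly; lx; lY; lX; lY]); (C2 [:: lY])]); vm_compute; reflexivity. Qed.

Lemma PE_yX : Q (of_word [:: lx]) (of_word [:: ly; lx]).
Proof. apply: (@Q_path _ _ [:: I1; (C2 [:: lx; lx; lY; lX; lY]); (C1 [:: ly; lx]); M2; (C2 [:: lX; lY]); M2; (C2 [:: lX; lY; lx]); (C2 [:: lx; lY]); M2; (C2 [:: lX; lY; lx; ly]); (C2 [:: lX; lX; lY; lx]); (C1 [:: lx; ly; lX; lY; lX; ly]); M2; (C2 [:: lY; lx; ly]); (C2 [:: lX; lX; lX]); M1; (C1 [:: lx; lx]); I2; (C1 [:: ly]); (C2 [:: lx]); M1; (C1 [:: lX; lY; lx; lx]); I1; (C1 [:: lx; ly; lX; lX]); M2; (C2 [:: lx; lx]); M1; (C2 [:: lx]); M1; (C1 [:: lX; lY]); (C1 [:: lx; lx; lY]); (C2 [:: lY; lX]); M1; (C1 [:: lx; ly; lX; lY; lX]); M1; I1; M2; I2; M1; I1; (C1 [:: lY]); (C2 [:: lY; lY])]); vm_compute; reflexivity. Qed.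

Lemma PE_Yx : Q (of_word [:: lx]) (of_word [:: lx; ly]).
Proof. apply: (@Q_path _ _ [:: (C2 [:: lx]); I1; (C1 [:: lx]); (C2 [:: lx; lx; lY; lX; lY]); (C1 [:: ly; lx]); M2; (C2 [:: lX; lY]); M2; (C2 [:: lX; lY; lx]); (C2 [:: lx; lY]); M2; (C2 [:: lX; lY; lx; ly]); (C2 [:: lX; lX; lY; lx]); (C1 [:: lx; ly; lX; lY; lX; ly]); M2; (C2 [:: lY; lx; ly]); (C2 [:: lX; lX; lX]); M1; (C1 [:: lx; lx]); I2; (C1 [:: ly]); (C2 [:: lx]); M1; (C1 [:: lX; lY; lx; lx]); I1; (C1 [:: lx; ly; lX; lX]); M2; (C2 [:: lx; lx]); M1; (C2 [:: lx]); M1; (C1 [:: lX; lY]); (C1 [:: lx; lx; lY]); (C2 [:: lY; lX]); M1; (C1 [:: lx; ly; lX; lY; lX]); M1; I1; M2; I2; M1; I1; (C1 [:: lY]); (C2 [:: lY; lY])]); vm_compute; reflexivity. Qed.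

Lemma PE_YX : Q (of_word [:: lx]) (of_word [:: lX; ly]).
Proof. apply: (@Q_path _ _ [:: I1; (C2 [:: lx; lx]); (C1 [:: lX; ly; ly; lX]); M2; (C2 [:: lx; lY]); (C2 [:: lx; lY]); M2; (C2 [:: lx; lY]); (C2 [:: lx; lY; lx; lx; lx; lY; lX]); (C1 [:: lY]); M2; (C2 [:: ly; lx; lY; lY]); (C2 [:: lX]); M1; I1; (C1 [:: lx; lx; lx; ly; lX; lX; lX; lY]); M2; (C2 [:: ly; lx]); I1; (C1 [:: ly]); M2; (C2 [:: lY; lx; lx; lx]); (C1 [:: lx; lx; lx]); (C2 [:: lY; lx; ly]); M1; (C1 [:: lY; lX]); (C1 [:: lX; lX]); (C2 [:: lx; lY; lX; lY; lx]); M1; (C1 [:: lX; ly; lx]); (C1 [:: lx; lx; lx; lY]); (C2 [:: ly; lx]); M1; (C1 [:: lX; lY; lX]); (C2 [:: lY; lX; lY; lx]); M1; (C1 [:: lX; ly; lx]); M1; I1; M2; I2; M1; I1; (C1 [:: ly; lx; lY; lX; lY]); (C2 [:: lY])]); vm_compute; reflexivity. Qed.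

Lemma PB_xY : Q (of_word [:: lx]) (of_word [:: lY]).
Proof. apply: (@Q_path _ _ [:: I1; (C2 [:: lx; lx]); (C1 [:: lY; lx; lY; lX]); M2; (C2 [:: lx; ly]); (C2 [:: ly; ly; ly; lx]); M2; (C2 [:: lx; ly; lX]); (C1 [:: ly]); M2; (C2 [:: lY; lx; ly]); (C2 [:: ly; ly; lx; ly; lX; lY; lX]); M1; I1; (C1 [:: lx; ly; lx; lY; lX; lY; lX; ly]); M2; (C2 [:: lY; lx; ly]); (C2 [:: ly; lx; ly]); (C1 [:: lx]); M2; (C2 [:: lX; lY; lx; ly; lx]); I1; (C1 [:: lX; lY; lx; ly]); M2; (C2 [:: lY; lX; ly; lx]); (C2 [:: ly; lx; ly; lx; lY; lx; ly; lX]); M1; (C1 [:: lx]); I1; (C1 [:: lY; lX; ly; lX; lY; lx; ly]); M2; (C2 [:: lY; lX; ly; lx]); I2; (C2 [:: lY; lx; ly; lX; ly; lX]); M1; (C1 [:: lx; lY]); I2; M1; (C1 [:: lY]); (C1 [:: lX; ly; lX]); M2; (C2 [:: lx; lY; lx; lY]); (C2 [:: lX; ly]); M1; (C1 [:: lY; lx]); M1; (C1 [:: lY; lx; lx]); I2; (C1 [:: lY]); (C2 [:: lY; lx]); M1; (C1 [:: lX; ly; lx; lY]); I2; (C2 [:: lX; ly]); M1; (C1 [:: lY; lx; lx]); (C1 [:: lY; lY; lx; ly; lX]); M2; (C2 [:: lx; lY]); I2; (C1 [:: lY]); M1; (C1 [:: lx; lx; lY; lY; lY]); I1; (C1 [::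 lY]); I2; (C2 [:: lx; lx; lY; lY; lY; lY])]); vm_compute; reflexivity. Qed.

Lemma PB_Xy : Q (of_word [:: lX]) (of_word [:: ly]).
Proof. apply: (@Q_path _ _ [:: I1; M2; (C2 [:: lX]); M2; (C2 [:: lX]); (C2 [:: lX; lY; lY]); (C1 [:: ly]); M2; (C2 [:: lY; lX; ly]); (C2 [:: ly; lx; lY; lX; lY]); M1; I1; (C1 [:: ly]); M2; (C2 [:: lY; lX; ly; lx]); (C1 [:: lx; ly; lX; lY; lX; lX; lY]); M2; (C2 [:: ly; lx]); I1; (C2 [:: lY]); (C1 [:: ly; lx]); M2; (C2 [:: lX; lY; lx; ly]); (C2 [:: ly; lX; lY]); M1; I1; (C1 [:: ly; lx]); M2; (C2 [:: lX; lY; lx; ly; lx; lY]); I2; (C1 [:: lY; lx; ly]); (C2 [:: lY; lX; ly; ly; lx; lY]); M1; (C1 [:: ly; lX; lY]); I2; (C1 [:: lX; ly; lx; lY; lx]); (C2 [:: ly; lX; lY]); M1; (C1 [:: ly; lx; lY]); (C1 [:: lX; ly; lX]); M2; (C2 [:: lY]); M1; (C1 [:: ly; lx; lY; lx]); (C1 [:: lY; lx; ly]); (C2 [:: lx; lx]); M1; (C1 [:: lX; lX; ly; lx]); I2; (C2 [:: lX; lX; ly; lx; lY]); M1; (C1 [:: ly; lX; lY; lx]); I2; (C1 [:: ly; ly]); (C2 [:: ly; lX; lY; lx; lx]); M1; (C1 [:: lX; lX; ly; lx]); (C1 [:: lx; lY; lX; ly; ly; ly]); M2; I2; (C2 [::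 lY; lY; lY; lx; lx; lx]); M1; (C1 [:: lX; lX]); (C1 [:: ly; lx; lY; lX; lY]); (C2 [:: lY; lY; lY; lY])]); vm_compute; reflexivity. Qed.

Lemma PB_XY : Q (of_word [:: lX]) (of_word [:: lY]).
Proof. apply: (@Q_path _ _ [:: I1; (C1 [:: lY; lX; lY]); I2; (C2 [:: lY; lY; lY; lY])]); vm_compute; reflexivity. Qed.

Lemma PB_yx : Q (of_word [:: ly]) (of_word [:: lx]).
Proof. apply: (@Q_path _ _ [:: I1; (C2 [:: ly; ly]); M2; (C2 [:: ly]); (C2 [:: lX; lX; lX; lX; ly]); M2; (C2 [:: ly; lx; ly]); (C2 [:: lx; lY; lX; lX; lX; lX]); (C1 [:: lx]); M2; (C2 [:: lX; ly; lx; ly]); (C2 [:: lx; lx]); (C1 [:: ly]); M2; (C2 [:: lY; lX]); (C2 [:: lX; lX]); (C1 [:: lx; lY; lX; lY; lx]); M2; (C2 [:: lX; ly; lx]); (C2 [:: lx; lx; lx; lY]); (C1 [:: ly; lx]); M2; (C2 [:: lX; lY; lX]); (C1 [:: lY; lX; lY; lx]); M2; (C2 [:: lX; ly; lx]); (C1 [:: ly; lx; lY; lX; lY]); (C2 [:: lY])]); vm_compute; reflexivity. Qed.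

Lemma PB_yX : Q (of_word [:: ly]) (of_word [:: lX]).
Proof. apply: (@Q_path _ _ [:: I1; (C2 [:: ly; ly]); (C1 [:: lX; ly; lX; lY]); M2; (C2 [:: ly; lx]); (C2 [:: lx; lx; lx; ly]); M2; (C2 [:: ly; lx; lY]); (C2 [:: lX]); M1; (C1 [:: lx]); I1; (C1 [:: lx; ly; lX; lY; lX; lX; lY]); M2; (C2 [:: ly; lx; lx]); I1; M2; (C2 [:: lx; ly; lx]); I1; (C1 [:: lx; ly]); M2; (C2 [:: lY; lX; ly; lx]); (C2 [:: ly; lx; ly; lx; lY; lx; ly; lX]); M1; (C1 [:: lx]); I1; (C1 [:: lY; lX; ly; lX; lY; lx; ly]); M2; (C2 [:: lY; lX; ly; lx]); I2; (C2 [:: lY; lx; ly; lX; ly; lX]); M1; (C1 [:: lx; lY]); I2; M1; (C1 [:: lY]); (C1 [:: lX; ly; lX]); M2; (C2 [:: lx; lY; lx; lY]); (C2 [:: lX; ly]); M1; (C1 [:: lY; lx]); M1; (C1 [:: lY; lx; lx]); I2; (C1 [:: lY]); (C2 [:: lY; lx]); M1; (C1 [:: lX; ly; lx; lY]); I2; (C2 [:: lX; ly]); M1; (C1 [:: lY; lx; lx]); (C1 [:: lY; lY; lx; ly; lX]); M2; (C2 [:: lx; lY]); I2; (C1 [:: lY]); M1; (C1 [:: lx; lx; lY; lY; lY]); I1; (C1 [:: lY]); I2; (C2 [:: lx; lx; lY; lY; lY; lY])]); vm_compute; reflexivity. Qed.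

Lemma PB_Yx : Q (of_word [:: lY]) (of_word [:: lx]).
Proof. apply: (@Q_path _ _ [:: I1; M2; (C2 [:: lY]); M2; (C2 [:: lY]); (C2 [:: lY; lX; lX; lX]); M1; (C1 [:: lx]); I1; M2; (C2 [:: lY; lx]); I1; (C2 [:: lx; ly]); (C1 [:: lY; lx; ly; lx]); M2; (C2 [:: lX; lY; lX; ly; lx]); I1; (C2 [:: lY]); (C1 [:: lX; lY; lX; ly; lx]); M2; (C2 [:: lX; lY; lx; ly]); (C2 [:: ly; lX; lY]); M1; I1; (C1 [:: ly; lx]); M2; (C2 [:: lX; lY; lx; ly; lx; lY]); I2; (C1 [:: lY; lx; ly]); (C2 [:: lY; lX; ly; ly; lx; lY]); M1; (C1 [:: ly; lX; lY]); I2; (C1 [:: lX; ly; lx; lY; lx]); (C2 [:: ly; lX; lY]); M1; (C1 [:: ly; lx; lY]); (C1 [:: lX; ly; lX]); M2; (C2 [:: lY]); M1; (C1 [:: ly; lx; lY; lx]); (C1 [:: lY; lx; ly]); (C2 [:: lx; lx]); M1; (C1 [:: lX; lX; ly; lx]); I2; (C2 [:: lX; lX; ly; lx; lY]); M1; (C1 [:: ly; lX; lY; lx]); I2; (C1 [:: ly; ly]); (C2 [:: ly; lX; lY; lx; lx]); M1; (C1 [:: lX; lX; ly; lx]); (C1 [:: lx; lY; lX; ly; ly; ly]); M2; I2; (C2 [:: lY; lY; lY; lx; lx; lx]); M1; (C1 [:: lX; lX]); (C1 [:: ly; lx; lY; lX; lY]); (C2 [:: lY; lY; lY; lY])]); vm_compute;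 reflexivity. Qed.

Lemma PB_YX : Q (of_word [:: lY]) (of_word [:: lX]).
Proof. apply: (@Q_path _ _ [:: I1; (C1 [:: lX; lY; lX; ly]); M2; (C2 [:: lY]); M2; (C2 [:: lY]); M2; (C2 [:: lY; lx]); (C2 [:: lx; lx; lx]); (C1 [:: lx; ly; lX; lY; lX]); M2; (C2 [:: lx; ly]); (C2 [:: lX; lX]); (C1 [:: ly; lx]); M2; (C2 [:: lX; lY; lx]); (C2 [:: lx]); (C1 [:: ly; lX; lY; lX]); M2; (C2 [:: lx; ly; lx]); (C2 [:: ly; lX; lX; lX; ly]); (C1 [:: ly; lx]); M2; (C2 [:: lX; lY; lx; ly; lx]); I1; (C1 [:: lX; lY]); I2; (C2 [:: lY; lY])]); vm_compute; reflexivity. Qed.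


Fixpoint cancel (rs v : seq letter) : nat :=
  match rs, v with
  | a :: rs', b :: v' => if b == linv a then (cancel rs' v').+1 else 0
  | _, _ => 0
  end.

Definition canc u v := cancel (rev u) v.

Lemma cancel_le rs v : cancel rs v <= minn (size rs) (size v).
Proof.
elim: rs v => [|a rs IH] [|b v] //=; case: eqP => // _.
by have := IH v; rewrite !minnSS.
Qed.

Lemma cancel_cat_r rs v1 v2 : cancel rs v1 < size v1 -> cancel rs (v1 ++ v2) = cancel rs v1.
Proof.
elim: rs v1 => [|a rs IH] [|b v1] //=; case: eqP => // _ H.
by rewrite IH.
Qed.

Lemma cancel_take rs v j : cancel rs v < j -> cancel rs (take j v) = cancel rs v.
Proof.
elim: rs v j => [|a rs IH] [|b v] [|j] //=; case: eqP => // _ H.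
by rewrite IH.
Qed.

Lemma cancel_spec rs v k : k <= cancel rs v -> take k v = map linv (take k rs).
Proof.
elim: rs v k => [|a rs IH] [|b v] [|k] //=; case: eqP => // -> H.
by rewrite (IH v k).
Qed.

Lemma reduced_join u a v : reduced (rcons u a) -> reduced (a :: v) -> reduced (rcons u a ++ v).
Proof.
case: u => [|c u] //= H1 H2.
by rewrite cat_path H1 last_rcons.
Qed.

Lemma reduced_catl u v : reduced (u ++ v) -> reduced u.
Proof. by case: u => [|c u] //=; rewrite cat_path => /andP[]. Qed.

Lemma reduced_catr u v : reduced (u ++ v) -> reduced v.
Proof.
elim: u => [|c u IH] // H; apply: IH.
exact: (reduced_behead H).
Qed.

Lemma foldr_red u v : reduced v -> foldr cons_red v u = red (u ++ v).
Proof. by move=> H; rewrite red_cat red_reduced. Qed.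

Lemma KL u v : reduced u -> reduced v ->
  red (u ++ v) = take (size u - canc u v) u ++ drop (canc u v) v.
Proof.
elim/last_ind: u v => [|u a IH] v Hu Hv; first by rewrite /canc /= drop0 red_reduced.
have Hu' : reduced u by move: Hu; rewrite -cats1 => /reduced_catl.
rewrite /canc rev_rcons -cats1 -catA /= red_cat.
have -> : red (a :: v) = cons_red a v by rewrite /= red_reduced.
case: v Hv => [|b v] Hv /=.
  rewrite foldr_red // red_reduced; last by rewrite cats1.
  by rewrite subn0 take_size cats0.
case: eqP => [Eb|Nb].
  have Hv' : reduced v by apply: (reduced_behead Hv).
  rewrite foldr_red // IH // /canc size_cat /= addn1 subSS.
  rewrite take_cat; case: ltnP => H; first by [].
  have E : size u - cancel (rev u) v = size u.
    by apply/eqP; rewrite eqn_leq leq_subr.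
  by rewrite E subnn take0 cats0 take_size.
rewrite foldr_red.
  rewrite red_reduced.
    by rewrite size_cat /= subn0 addn1 take_oversize ?size_cat ?addn1 // -catA.
  by rewrite -cat_rcons; apply: reduced_join; rewrite ?cats1 // reduced_consE Hv /=; apply/eqP.
by rewrite reduced_consE Hv /=; apply/eqP.
Qed.

Lemma size_KL u v : reduced u -> reduced v ->
  size (red (u ++ v)) = size u + size v - 2 * canc u v /\
  canc u v <= size u /\ canc u v <= size v.
Proof.
move=> Hu Hv; have := cancel_le (rev u) v; rewrite size_rev -/(canc u v) => Hc.
have H1 : canc u v <= size u by apply: (leq_trans Hc); exact: geq_minl.
have H2 : canc u v <= size v by apply: (leq_trans Hc); exact: geq_minr.
rewrite KL // size_cat size_take size_drop.
split=> //; case: ltnP => H; lia.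
Qed.

Definition Ew (G : letter -> seq letter) w := red (flatten (map G w)).
Definition cn (G : letter -> seq letter) l (w : seq letter) := if w is l' :: _ then canc (G l) (G l') else 0.

Lemma Ew_reduced G w : reduced (Ew G w).
Proof. exact: reduced_red. Qed.

Lemma prod_inv (G : letter -> seq letter) (HG : forall l, reduced (G l))
  (H1 : forall l1 l2, l2 != linv l1 ->
    canc (G l1) (G l2) < size (G l1) /\ canc (G l1) (G l2) < size (G l2))
  (H2 : forall l1 l2 l3, l2 != linv l1 -> l3 != linv l2 ->
    canc (G l1) (G l2) + canc (G l2) (G l3) < size (G l2)) l w : reduced (l :: w) ->
  exists Z, Ew G (l :: w) = take (size (G l) - cn G l w) (G l) ++ Z /\ (w != [::] -> Z != [::]).
Proof.
elim: w l => [|l' w IH] l Hw.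
  by exists [::]; rewrite /Ew /= cats0 subn0 take_size cats0 red_reduced.
have Hl' : l' != linv l by move: Hw; rewrite reduced_consE => /andP[].
have Hw' : reduced (l' :: w) by apply: (reduced_behead Hw).
have [Z' [E' _]] := IH l' Hw'.
set T' := take _ (G l') in E'.
have HT : size T' = size (G l') - cn G l' w.
  rewrite /T' size_take; case: ltnP => // H.
  by have := leq_subr (cn G l' w) (size (G l')); lia.
have Hc0 : canc (G l) (G l') < size T'.
  rewrite HT; case: w Hw Hw' {IH E' HT T'} => [|l'' w] Hw Hw' /=.
    by rewrite subn0; case: (H1 _ _ Hl').
  have Hl'' : l'' != linv l' by move: Hw'; rewrite reduced_consE => /andP[].
  have := H2 _ _ _ Hl' Hl''; lia.
have Ec : canc (G l) (T' ++ Z') = canc (G l) (G l').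
  have Ht : cancel (rev (G l)) T' = canc (G l) (G l').
    by rewrite /T' cancel_take //; rewrite HT in Hc0; exact: Hc0.
  by rewrite /canc cancel_cat_r Ht.
exists (drop (canc (G l) (G l')) (T' ++ Z')); split; last first.
  move=> _; rewrite -size_eq0 size_drop size_cat subn_eq0 -ltnNge; apply: (leq_trans Hc0); exact: leq_addr.
have -> : Ew G [:: l, l' & w] = red (G l ++ Ew G (l' :: w)).
  by rewrite /Ew red_catr.
by rewrite E' KL ?HG ?Ec // -E' Ew_reduced.
Qed.

Lemma prod_size (G : letter -> seq letter) (HG : forall l, reduced (G l))
  (H1 : forall l1 l2, l2 != linv l1 ->
    canc (G l1) (G l2) < size (G l1) /\ canc (G l1) (G l2) < size (G l2))
  (H2 : forall l1 l2 l3, l2 != linv l1 -> l3 != linv l2 ->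
    canc (G l1) (G l2) + canc (G l2) (G l3) < size (G l2)) w : reduced w -> 2 <= size w -> 2 <= size (Ew G w).
Proof.
case: w => [|l [|l' w]] // Hw _.
have [Z [E HZ]] := prod_inv HG H1 H2 Hw.
have Hl' : l' != linv l by move: Hw; rewrite reduced_consE => /andP[].
have [Ha _] := H1 _ _ Hl'.
have HZ0 : 0 < size Z by rewrite lt0n size_eq0; exact: HZ.
rewrite E size_cat size_take /cn.
case: (ltnP (size (G l) - canc (G l) (G l')) (size (G l))) => H; lia.
Qed.



Lemma canc_spec u v k : k <= canc u v -> drop (size u - k) u = winv (take k v).
Proof.
move=> /cancel_spec ->; rewrite take_rev /winv -map_comp.
by rewrite (eq_map linvK) map_id revK.
Qed.

Lemma reduced_adj p c q : reduced (p ++ c :: linv c :: q) = false.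
Proof.
apply/negP => /reduced_catr; rewrite reduced_consE /= => /andP[_].
by rewrite eqxx.
Qed.

Lemma reduced_winv_cat d : d != [::] -> reduced (winv d ++ d) = false.
Proof.
case: d => [|c d] // _.
rewrite winv_cons -catA /=; have := reduced_adj (winv d) (linv c) d; by rewrite linvK.
Qed.

Lemma size_winv' d : size (winv d) = size d.
Proof. exact: size_winv. Qed.

Lemma self_canc v : reduced v -> v != [::] -> 2 * canc v v < size v.
Proof.
move=> Hv Hne; rewrite ltnNge; apply/negP => H.
set n := size v in H.
have Hk : n - n./2 <= canc v v.
  have := odd_double_half n; case: (odd n) => /=; lia.
have E := canc_spec Hk.
have Hsub : n - (n - n./2) = n./2 by have := odd_double_half n; case: (odd n) => /=; lia.
rewrite -/n Hsub in E.
case Ho: (odd n).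
  have Hn : n = (n./2).*2.+1 by rewrite -[LHS](odd_double_half n) Ho.
  set j := n./2 in Hn E Hsub.
  have Hj : j < n by lia.
  have Ht : size (take (n - j) v) = n - j.
    rewrite size_take; case: ltnP => //; rewrite -/n; lia.
  have := congr1 (fun s => nth (false,false) s 0) E.
  rewrite /= nth_drop addn0 /winv nth_rev size_map Ht; last by lia.
  have -> : n - j - 1 = j by lia.
  rewrite (nth_map (false,false)); last by rewrite Ht; lia.
  rewrite nth_take; last by lia.
  by move=> E2; move: (linv_neq (nth (false,false) v j)); rewrite -E2 eqxx.
have Hn : n = (n./2).*2 by rewrite -[LHS](odd_double_half n) Ho.
set j := n./2 in Hn E Hsub Hk.
have Hj : 0 < j by move: Hne; rewrite -size_eq0 -/n; lia.
have Ek : n - j = j by lia.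
rewrite Ek in E.
have := reduced_winv_cat (d := drop j v).
rewrite -size_eq0 size_drop -/n.
have -> : (n - j == 0) = false by lia.
move=> /(_ isT).
have -> : winv (drop j v) = take j v by rewrite E winvK.
by rewrite cat_take_drop Hv.
Qed.

Lemma take_winv k u : take k (winv u) = winv (drop (size u - k) u).
Proof. by rewrite /winv take_rev size_map map_drop. Qed.

Lemma tie_inv u v k : reduced u -> reduced v -> size v = 2 * k -> 0 < k ->
  k <= canc u v -> k <= canc v (winv u) -> False.
Proof.
move=> Hu Hv Hs Hk H1 H2.
have E1 := canc_spec H1.
have E2 := canc_spec H2.
rewrite take_winv E1 winvK Hs in E2.
have Hs' : 2 * k - k = k by lia.
rewrite Hs' in E2.
have := reduced_winv_cat (d := winv (take k v)).
rewrite winvK -E2 cat_take_drop Hv => H; suff: true = false by []; apply: H.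
by rewrite -size_eq0 size_drop Hs; lia.
Qed.

Lemma tie_struct u v k : reduced u -> reduced v -> size v = 2 * k ->
  k <= canc u v -> k <= canc v u -> 2 * k <= size u ->
  u = winv (drop k v) ++ take (size u - 2 * k) (drop k u) ++ winv (take k v).
Proof.
move=> Hu Hv Hs H1 H2 Hsu.
have E1 := canc_spec H1.
have E2 := canc_spec H2.
have Hs' : size v - k = k by lia.
rewrite Hs' in E2.
have E3 : take k u = winv (drop k v) by rewrite E2 winvK.
rewrite -E3 -E1 -{1}(cat_take_drop k u); congr cat.
rewrite -{1}(cat_take_drop (size u - 2 * k) (drop k u)) drop_drop; congr cat.
congr drop; lia.
Qed.


Definition gen (a b : F) := forall g, exists w, evw a b w = g.

Lemma gen_transfer a b a' b' p q :
  ev a' b' p = a -> ev a' b' q = b -> gen a b -> gen a' b'.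
Proof.
move=> Ea Eb Hg g; have [w Hw] := Hg g.
exists (val (ev p q (of_word w))).
by rewrite -/(ev a' b' _) ev_comp Ea Eb ev_of_word.
Qed.

Definition lz (fy : bool) (l : letter) : Z :=
  if l.1 == fy then (if l.2 then (-1)%Z else 1%Z) else 0%Z.

Fixpoint es (fy : bool) (w : seq letter) : Z :=
  match w with [::] => 0%Z | l :: w => (lz fy l + es fy w)%Z end.

Lemma es_cat fy u v : es fy (u ++ v) = (es fy u + es fy v)%Z.
Proof. elim: u => [|l u IH] //=; rewrite IH; lia. Qed.

Lemma lz_linv fy l : lz fy (linv l) = (- lz fy l)%Z.
Proof. by case: l => [[] []]; case: fy. Qed.

Lemma es_red fy w : es fy (red w) = es fy w.
Proof.
elim: w => [|l w IH] //.
have -> : red (l :: w) = cons_red l (red w) by [].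
rewrite /= -IH; case: (red w) => [|c r] //=.
case: eqP => [->|_] //=; rewrite lz_linv; lia.
Qed.

Local Arguments Z.add : simpl never.
Local Arguments Z.mul : simpl never.
Local Arguments Z.opp : simpl never.

Definition esF fy (g : F) := es fy (val g).

Lemma esF_mul fy g h : esF fy (mulF g h) = (esF fy g + esF fy h)%Z.
Proof. by rewrite /esF val_mulF es_red es_cat. Qed.

Lemma esF_inv fy g : esF fy (invF g) = (- esF fy g)%Z.
Proof.
have := esF_mul fy (invF g) g; rewrite mulVF.
have -> : esF fy oneF = 0%Z by [].
lia.
Qed.

Lemma esF_evw fy a b w :
  esF fy (evw a b w) = (es false w * esF fy a + es true w * esF fy b)%Z.
Proof.
elim: w => [|l w IH] //=; rewrite esF_mul IH.
case: fy IH => IH; case: l => [[] []]; rewrite /img /lz /= ?esF_inv; lia.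
Qed.

Definition len (g : F) := size (val g).

Lemma len0 g : len g = 0 -> g = oneF.
Proof. by move=> H; apply: val_inj; move: H; rewrite /len /=; case: (val g). Qed.

Lemma gen_nontriv a b : gen a b -> 0 < len a /\ 0 < len b.
Proof.
move=> Hg; have [w1 E1] := Hg X; have [w2 E2] := Hg Y.
have h1 := esF_evw false a b w1; have h2 := esF_evw true a b w1.
have h3 := esF_evw false a b w2; have h4 := esF_evw true a b w2.
rewrite E1 in h1 h2; rewrite E2 in h3 h4.
have e1 : esF false X = 1%Z by []. have e2 : esF true X = 0%Z by [].
have e3 : esF false Y = 0%Z by []. have e4 : esF true Y = 1%Z by [].
split; rewrite lt0n; apply/negP => /eqP /len0 E.
- have e5 : esF false a = 0%Z by rewrite E.
  have e6 : esF true a = 0%Z by rewrite E.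
  rewrite e5 e6 in h1 h2 h3 h4; nia.
- have e5 : esF false b = 0%Z by rewrite E.
  have e6 : esF true b = 0%Z by rewrite E.
  rewrite e5 e6 in h1 h2 h3 h4; nia.
Qed.


Definition newgen (l1 l2 : letter) a b :=
  let m := mulF (img a b l1) (img a b l2) in if l1.2 then invF m else m.

Definition np (l1 l2 : letter) a b : F * F :=
  if l1.1 then (a, newgen l1 l2 a b) else (newgen l1 l2 a b, b).

Definition sw (l1 l2 : letter) : F * F :=
  if l1.1 then (X, of_word (if l1.2 then [:: l2; ly] else [:: ly; linv l2]))
  else (of_word (if l1.2 then [:: l2; lx] else [:: lx; linv l2]), Y).

Lemma Q_sw l1 l2 : l1.1 != l2.1 -> Q (sw l1 l2).1 (sw l1 l2).2.
Proof.
case: l1 => [[] []]; case: l2 => [[] []] //= _;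
first [exact PE_xy | exact PE_xY | exact PE_Xy | exact PE_XY
      | exact PE_yx | exact PE_yX | exact PE_Yx | exact PE_YX].
Qed.

Lemma np_ev l1 l2 a b : l1.1 != l2.1 ->
  ev (np l1 l2 a b).1 (np l1 l2 a b).2 (sw l1 l2).1 = a /\
  ev (np l1 l2 a b).1 (np l1 l2 a b).2 (sw l1 l2).2 = b.
Proof.
case: l1 => [[] []]; case: l2 => [[] []] //= _;
rewrite /np /newgen /sw /= ?ev_X ?ev_Y ?ev_of_word /= /img /=; split; gsimp; done.
Qed.

Lemma Q_np l1 l2 a b : l1.1 != l2.1 -> Q (np l1 l2 a b).1 (np l1 l2 a b).2 -> Q a b.
Proof.
move=> H HQ; have [E1 E2] := np_ev a b H.
by have := Q_edge (Q_sw H) HQ; rewrite E1 E2.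
Qed.

Lemma gen_np l1 l2 a b : l1.1 != l2.1 -> gen a b -> gen (np l1 l2 a b).1 (np l1 l2 a b).2.
Proof. by move=> H; have [E1 E2] := np_ev a b H; apply: gen_transfer E1 E2. Qed.

Lemma len_inv g : len (invF g) = len g.
Proof. by rewrite /len val_invF size_winv. Qed.

Lemma len_np l1 l2 a b :
  len (np l1 l2 a b).1 + len (np l1 l2 a b).2 =
  (if l1.1 then len a else len b) + len (mulF (img a b l1) (img a b l2)).
Proof.
rewrite /np /newgen; case: l1 => [[] []] /=; rewrite ?len_inv; lia.
Qed.

Lemma len_img a b l : len (img a b l) = if l.1 then len b else len a.
Proof. by case: l => [[] []]; rewrite /img /= ?len_inv. Qed.

Lemma gen_cnj c a b : gen a b -> gen (cnj c a) (cnj c b).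
Proof.
move=> Hg g; have [w Hw] := Hg (cnj (invF c) g).
exists w; by rewrite -ev_of_word ev_cnj ev_of_word Hw /cnj; gsimp.

Qed.

Lemma Q_uncnj c a b : Q (cnj c a) (cnj c b) -> Q a b.
Proof.
move=> H; have := Q_cnj (invF c) H.
by rewrite /cnj; gsimp.
Qed.


Definition Gw a b l := val (img a b l).

Lemma Gw_red a b l : reduced (Gw a b l).
Proof. by rewrite /Gw; case: (img a b l). Qed.

Lemma valP' (g : F) : reduced (val g).
Proof. by case: g. Qed.

Lemma Gw_linv a b l : Gw a b (linv l) = winv (Gw a b l).
Proof. by rewrite /Gw img_linv val_invF. Qed.

Lemma len_mul g h : len (mulF g h) = len g + len h - 2 * canc (val g) (val h).
Proof. by rewrite /len val_mulF; have [-> _] := size_KL (valP' g) (valP' h). Qed.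

Lemma canc_bounds g h : canc (val g) (val h) <= len g /\ canc (val g) (val h) <= len h.
Proof. by rewrite /len; have [_ H] := size_KL (valP' g) (valP' h). Qed.

Lemma val_evw a b w : val (evw a b w) = Ew (Gw a b) w.
Proof.
elim: w => [|l w IH] //.
have -> : evw a b (l :: w) = mulF (img a b l) (evw a b w) by [].
by rewrite val_mulF IH /Ew red_catr.
Qed.

Lemma size_red_le w : size (red w) <= size w.
Proof.
elim: w => [|l w IH] //.
have -> : red (l :: w) = cons_red l (red w) by [].
case: (red w) IH => [|c r] /= IH //.
case: eqP => _ /=; lia.
Qed.

Lemma same_fam (l1 l2 : letter) : l1.1 = l2.1 -> l2 != linv l1 -> l2 = l1.
Proof. by case: l1 => [[] []]; case: l2 => [[] []]. Qed.

Lemma fam_cases (l1 l3 : letter) : l3.1 = l1.1 -> l3 = l1 \/ l3 = linv l1.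
Proof. by case: l1 => [[] []]; case: l3 => [[] []]; auto. Qed.

Lemma img_cnj c a b l : img (cnj c a) (cnj c b) l = cnj c (img a b l).
Proof. by case: l => [[] []]; rewrite /img /= /cnj; gsimp. Qed.

Lemma val_cnj c g : val (cnj c g) = red (winv (val c) ++ val g ++ val c).
Proof.
rewrite /cnj (val_mulF (mulF (invF c) g) c) (val_mulF (invF c) g) val_invF red_catl.
by rewrite -catA.
Qed.

Lemma len_cnj_inv c g : len (cnj c (invF g)) = len (cnj c g).
Proof.
have -> : cnj c (invF g) = invF (cnj c g) by rewrite /cnj; gsimp.
by rewrite len_inv.
Qed.

Definition ND a b := forall l1 l2 : letter, l1.1 != l2.1 ->
  len (img a b l1) <= len (mulF (img a b l1) (img a b l2)).

Lemma linv_fst l : (linv l).1 = l.1.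
Proof. by case: l. Qed.

Lemma ND_sym a b l1 l2 : ND a b -> l1.1 != l2.1 ->
  len (img a b l2) <= len (mulF (img a b l1) (img a b l2)).
Proof.
move=> H Hm; have := H (linv l2) (linv l1); rewrite !linv_fst eq_sym => /(_ Hm).
by rewrite !img_linv -invF_mul !len_inv.
Qed.

Lemma Bmix a b l1 l2 : ND a b -> l1.1 != l2.1 ->
  2 * canc (Gw a b l1) (Gw a b l2) <= size (Gw a b l1) /\
  2 * canc (Gw a b l1) (Gw a b l2) <= size (Gw a b l2).
Proof.
move=> H Hm; have h1 := H l1 l2 Hm; have h2 := ND_sym H Hm.
rewrite len_mul in h1 h2; have [c1 c2] := canc_bounds (img a b l1) (img a b l2).
rewrite /Gw; rewrite /len in h1 h2 c1 c2; lia.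
Qed.

Lemma size_Gw a b l : size (Gw a b l) = if l.1 then len b else len a.
Proof. exact: len_img. Qed.

Lemma Bgen a b l1 l2 : ND a b -> 0 < len a -> 0 < len b -> l2 != linv l1 ->
  [/\ 2 * canc (Gw a b l1) (Gw a b l2) <= size (Gw a b l1),
      2 * canc (Gw a b l1) (Gw a b l2) <= size (Gw a b l2) &
      (l1.1 = l2.1 -> 2 * canc (Gw a b l1) (Gw a b l2) < size (Gw a b l2))].
Proof.
move=> H Ha Hb Hn.
case: (boolP (l1.1 == l2.1)) => [/eqP E|Hm].
  have E2 := same_fam E Hn; subst l2.
  have Hs : 2 * canc (Gw a b l1) (Gw a b l1) < size (Gw a b l1).
    apply: self_canc; first exact: Gw_red.
    by rewrite -size_eq0 size_Gw; case: ifP => _; lia.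
  by split=> //; apply: ltnW.
have [h1 h2] := Bmix H Hm; split=> // E; by rewrite E eqxx in Hm.
Qed.

Lemma inv_eq a g : invF a = g -> a = invF g.
Proof. by move=> <-; rewrite invFK. Qed.

Lemma img_eq a b l g : img a b l = g -> (if l.1 then b else a) = (if l.2 then invF g else g).
Proof. by case: l => [[] []]; rewrite /img /= => <-; rewrite ?invFK. Qed.

Lemma Q_letters a b l l' : img a b l = X -> img a b l' = Y -> Q a b.
Proof.
move=> /img_eq E1 /img_eq E2.
case: l E1 => [[] []] /= E1; case: l' E2 => [[] []] /= E2; subst;
  try (move/(congr1 val): E2 => E; vm_compute in E; discriminate).
all: rewrite /X /Y ?invF_of_word.
all: first [exact Q_XY | exact PB_xY | exact PB_Xy | exact PB_XY | exact PB_yx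
           | exact PB_yX | exact PB_Yx | exact PB_YX].
Qed.

Lemma HP1 (a b : F) (HN : ND a b) (Ha : 0 < len a) (Hb : 0 < len b) (l1 l2 : letter) : l2 != linv l1 ->
  canc (Gw a b l1) (Gw a b l2) < size (Gw a b l1) /\ canc (Gw a b l1) (Gw a b l2) < size (Gw a b l2).
Proof.
move=> Hn; have [h1 h2 _] := Bgen HN Ha Hb Hn.
have s1 : 0 < size (Gw a b l1) by rewrite size_Gw; case: ifP.
have s2 : 0 < size (Gw a b l2) by rewrite size_Gw; case: ifP.
split; lia.
Qed.

Lemma letter_of (a b : F) (Hg : gen a b) (HN : ND a b) (Ha : 0 < len a) (Hb : 0 < len b)
  (HT : forall l1 l2 l3 : letter, l2 != linv l1 -> l3 != linv l2 ->
  canc (Gw a b l1) (Gw a b l2) + canc (Gw a b l2) (Gw a b l3) < size (Gw a b l2)) g : size (val g) = 1 -> exists l, img a b l = g.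
Proof.
move=> Hs; have [w Hw] := Hg g.
rewrite -evw_red in Hw.
have Hr : reduced (red w) by exact: reduced_red.
case: (leqP 2 (size (red w))) => H.
  have := prod_size (@Gw_red a b) (HP1 HN Ha Hb) HT Hr H.
  by rewrite -val_evw Hw Hs.
move: Hw Hr H; case: (red w) => [|l [|l' w']] //=.
  by move=> E; rewrite -E in Hs.
by move=> <- _ _; exists l; rewrite mulF1.
Qed.

Lemma base_Q (a b : F) (Hg : gen a b) (HN : ND a b) (Ha : 0 < len a) (Hb : 0 < len b)
  (HT : forall l1 l2 l3 : letter, l2 != linv l1 -> l3 != linv l2 ->
  canc (Gw a b l1) (Gw a b l2) + canc (Gw a b l2) (Gw a b l3) < size (Gw a b l2)) : Q a b.
Proof.
have [l E1] := letter_of Hg HN Ha Hb HT (g := X) erefl.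
have [l' E2] := letter_of Hg HN Ha Hb HT (g := Y) erefl.
exact: Q_letters E1 E2.
Qed.



Lemma red_mid3 p q r : red (p ++ red q ++ r) = red (p ++ q ++ r).
Proof. by rewrite red_mid red_catl -red_mid. Qed.

Lemma len_cnj_img c a b l :
  len (cnj c (img a b l)) = (if l.1 then len (cnj c b) else len (cnj c a)).
Proof. by case: l => [[] []]; rewrite /img /= ?len_cnj_inv. Qed.

Lemma tie_Q a b n
  (IH : forall a b, len a + len b <= n -> gen a b -> Q a b)
  (Hg : gen a b) (HN : ND a b) (Ha : 0 < len a) (Hb : 0 < len b)
  (Hn : len a + len b <= n.+1) (l1 l2 l3 : letter)
  (N12 : l2 != linv l1) (N23 : l3 != linv l2)
  (Hsum : size (Gw a b l2) <= canc (Gw a b l1) (Gw a b l2) + canc (Gw a b l2) (Gw a b l3)) :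
  Q a b.
Proof.
have [b12 b12' s12] := Bgen HN Ha Hb N12.
have [b23 b23' s23] := Bgen HN Ha Hb N23.
have sv : 0 < size (Gw a b l2) by rewrite size_Gw; case: ifP.
have M12 : l1.1 != l2.1.
  by apply/negP => /eqP /s12 h; lia.
have M23 : l2.1 != l3.1.
  apply/negP => /eqP E; have E3 := same_fam E N23; subst l3.
  by have := s23 E; lia.
set u := Gw a b l1 in b12 b12' s12 Hsum *.
set v := Gw a b l2 in b12 b12' s12 b23 b23' s23 Hsum sv *.
set k := canc u v in b12 b12' s12 Hsum *.
have Hv2 : size v = 2 * k by lia.
have Hk : 0 < k by lia.
have Hk23 : k <= canc v (Gw a b l3) by lia.
have Hf : l3.1 = l1.1 by move: M12 M23; case: (l1.1); case: (l2.1); case: (l3.1).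
have Hu : reduced u by exact: Gw_red.
have Hv : reduced v by exact: Gw_red.
case: (fam_cases Hf) => E3; subst l3; last first.
  rewrite Gw_linv -/u in Hk23.
  by case: (tie_inv Hu Hv Hv2 Hk (leqnn k) Hk23).
rewrite -/u in Hk23.
have Eu := tie_struct Hu Hv Hv2 (leqnn k) Hk23 b12.
set t := take k v in Eu; set d := drop k v in Eu.
set m := take (size u - 2 * k) (drop k u) in Eu.
have Evtd : v = t ++ d by rewrite cat_take_drop.
have Ht : reduced t by move: Hv; rewrite Evtd => /reduced_catl.
have Hm : reduced m by move: Hu; rewrite Eu => /reduced_catr /reduced_catl.
have Hsm : size m = size u - 2 * k.
  rewrite /m size_take size_drop; case: ltnP => //; lia.
set c := of_word t.
have Hc : val c = t by rewrite /= red_reduced.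
apply: (@Q_uncnj c a b).
have M' : (linv l1).1 != (linv l2).1 by rewrite !linv_fst.
apply: (Q_np M'); apply: IH; last by apply: (gen_np M'); exact: gen_cnj.
rewrite len_np linv_fst !img_cnj.
have -> : mulF (cnj c (img a b (linv l1))) (cnj c (img a b (linv l2))) =
          invF (cnj c (mulF (img a b l2) (img a b l1))).
  by rewrite !img_linv /cnj; gsimp.
rewrite len_inv.
have E1 : len (cnj c (mulF (img a b l2) (img a b l1))) = size m.
  rewrite /len val_cnj (val_mulF (img a b l2) (img a b l1)) red_mid3 Hc.
  change (val (img a b l1)) with u; change (val (img a b l2)) with v.
  rewrite Evtd Eu -!catA red_winv_cancel red_winv_cancel'.
  have Z : red (winv t ++ t) = [::] by have := red_winv_cancel t [::]; rewrite cats0.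
  by rewrite (red_mid m) Z cats0 red_reduced.
have E2 : len (cnj c (img a b l2)) <= size v.
  rewrite /len val_cnj Hc; change (val (img a b l2)) with v.
  rewrite Evtd -catA red_winv_cancel.
  by apply: (leq_trans (size_red_le _)); rewrite !size_cat addnC.
have E3 : (if l1.1 then len (cnj c a) else len (cnj c b)) = len (cnj c (img a b l2)).
  by rewrite len_cnj_img; move: M12; case: (l1.1); case: (l2.1).
have E4 : len a + len b = size u + size v.
  by rewrite /u /v !size_Gw; move: M12; case: (l1.1); case: (l2.1) => //= _; lia.
rewrite E3 E1; lia.
Qed.


Lemma nielsen n : forall a b, len a + len b <= n -> gen a b -> Q a b.
Proof.
elim: n => [|n IH] a b Hn Hg.
  by have [Ha Hb] := gen_nontriv Hg; lia.
have [Ha Hb] := gen_nontriv Hg.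
case: (boolP [exists l1 : letter, exists l2 : letter,
   (l1.1 != l2.1) && (len (mulF (img a b l1) (img a b l2)) < len (img a b l1))]).
  move/existsP => [l1 /existsP [l2 /andP [Hm Hlt]]].
  apply: (Q_np Hm); apply: IH; last exact: gen_np.
  rewrite len_np; rewrite len_img in Hlt; move: Hlt Hn; case: (l1.1); lia.
move=> Hne.
have HN : ND a b.
  move=> l1 l2 Hm; rewrite leqNgt; apply/negP => H; move/negP: Hne; apply.
  by apply/existsP; exists l1; apply/existsP; exists l2; rewrite Hm H.
case: (boolP [exists l1 : letter, exists l2 : letter, exists l3 : letter,
   [&& l2 != linv l1, l3 != linv l2 &
    size (Gw a b l2) <= canc (Gw a b l1) (Gw a b l2) + canc (Gw a b l2) (Gw a b l3)]]).
  move/existsP => [l1 /existsP [l2 /existsP [l3 /and3P [N12 N23 Hs]]]].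
  exact: (tie_Q IH Hg HN Ha Hb Hn N12 N23 Hs).
move=> Hne2; apply: base_Q => // l1 l2 l3 N12 N23.
rewrite ltnNge; apply/negP => H; move/negP: Hne2; apply.
by apply/existsP; exists l1; apply/existsP; exists l2; apply/existsP; exists l3; rewrite N12 N23 H.
Qed.

Theorem corollary8 (u v : F) (phi : F -> F) :
  ac_equiv (u, v) AK3 -> is_aut phi -> ac_equiv (phi u, phi v) AK3.
Proof.
move=> Hac [Hhom Hbij].
have H1 := ac_hom Hhom Hac.
have Hg : gen (phi X) (phi Y).
  case: Hbij => psi c1 c2 g.
  exists (val (psi g)); rewrite -/(ev _ _ (psi g)) -(hom_ev _ Hhom).
  by rewrite c2.
have HQ := nielsen (leqnn _) Hg.
rewrite /Q -!(hom_ev _ Hhom) in HQ.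
exact: ac_trans H1 HQ.
Qed.
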